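(* For each $n\ge 2$, there are exactly $2^{\aleph_0}$ pairwise non-isomorphic diameter-$4$ perfect Lee codes in $Z^n$.
   Context: Lee distance on $Z^n$: $\rho_L(v,w)=\sum_i|v_i-w_i|$; $S_{n,1}(v)=\{w:\rho_L(v,w)\le1\}$; for $\rho_L(v,w)=1$ the double-sphere is $DS_{n,1}(v,w)=S_{n,1}(v)\cup S_{n,1}(w)$. A copy of a set is its image under a linear distance-preserving bijection of $Z^n$; a tiling is a family of pairwise disjoint copies covering $Z^n$. A diameter-$4$ perfect Lee code in $Z^n$ is a set $\mathcal{L}$ with pairwise Lee distances $\ge 4$ such that there is a tiling of $Z^n$ by copies of $DS_{n,1}$ (the maximum-size anticode of diameter $3$) in which each tile contains exactly one element of $\mathcal{L}$ and distinct tiles contain distinct elements. Two codes are isomorphic if some linear distance-preserving bijection $Z^n\to Z^n$ maps one onto the other. *)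

(* Defs.v *)
From mathcomp Require Import all_boot all_order all_algebra.
Set Implicit Arguments. Unset Strict Implicit. Unset Printing Implicit Defensive.
Import Order.TTheory GRing.Theory Num.Theory.
Local Open Scope ring_scope.

Definition Zn (n : nat) := 'rV[int]_n.

Definition lee_dist (n : nat) (v w : Zn n) : int :=
  \sum_(i < n) `|v ord0 i - w ord0 i|.

Definition S1 (n : nat) (v : Zn n) : Zn n -> Prop :=
  fun w => lee_dist v w <= 1.

Definition DS1 (n : nat) (v w : Zn n) : Zn n -> Prop :=
  fun x => S1 v x \/ S1 w x.

Definition is_linear (n : nat) (f : Zn n -> Zn n) : Prop :=
  forall (a : int) (u v : Zn n), f (a *: u + v) = a *: f u + f v.

Definition lin_isometry (n : nat) (f : Zn n -> Zn n) : Prop :=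
  [/\ is_linear f, bijective f & forall u v, lee_dist (f u) (f v) = lee_dist u v].

Definition img (n : nat) (f : Zn n -> Zn n) (A : Zn n -> Prop) : Zn n -> Prop :=
  fun y => exists2 x, A x & f x = y.

Definition DS_copy (n : nat) (T : Zn n -> Prop) : Prop :=
  exists f v w, [/\ lin_isometry f, lee_dist v w = 1 &
                    forall x, T x <-> img f (DS1 v w) x].

Definition DS_tiling (n : nat) (F : (Zn n -> Prop) -> Prop) : Prop :=
  [/\ forall T, F T -> DS_copy T,
      forall T1 T2, F T1 -> F T2 -> T1 <> T2 -> forall x, ~ (T1 x /\ T2 x) &
      forall x, exists2 T, F T & T x].

Definition perfect_lee_code_diam4 (n : nat) (L : Zn n -> Prop) : Prop :=
  (forall c d, L c -> L d -> c <> d -> 4 <= lee_dist c d) /\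
  exists F : (Zn n -> Prop) -> Prop,
    [/\ DS_tiling F,
        (forall T, F T -> exists c, [/\ L c, T c & forall d, L d -> T d -> d = c]) &
        (forall T1 T2 c1 c2, F T1 -> F T2 -> T1 <> T2 ->
            L c1 -> T1 c1 -> L c2 -> T2 c2 -> c1 <> c2)].

Definition iso_codes (n : nat) (L1 L2 : Zn n -> Prop) : Prop :=
  exists f, lin_isometry f /\ forall y, L2 y <-> img f L1 y.

(* Main.v *)
Require Import Defs.
From mathcomp Require Import all_boot all_order all_algebra zify ring.
From Stdlib Require Import ClassicalEpsilon FunctionalExtensionality.
Set Implicit Arguments. Unset Strict Implicit. Unset Printing Implicit Defensive.
Import Order.TTheory GRing.Theory Num.Theory.
Local Open Scope ring_scope.

Definition nrm n (y : Zn n) : int := \sum_(i < n) `|y ord0 i|.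
Definition psi n (y : Zn n) : int := \sum_(i < n) y ord0 i.
Definition chi n (y : Zn n) : int := \sum_(i < n) (i : nat)%:Z * y ord0 i.
Definition ev n (i : 'I_n) : Zn n := \row_(j < n) ((j == i)%:R : int).

Lemma lee_nrm n (v w : Zn n) : lee_dist v w = nrm (w - v).
Proof. apply: eq_bigr => i _; rewrite !mxE distrC. reflexivity. Qed.

Lemma nrmN n (y : Zn n) : nrm (- y) = nrm y.
Proof. apply: eq_bigr => i _; rewrite !mxE normrN. done. Qed.

Lemma nrmD n (x y : Zn n) : nrm (x + y) <= nrm x + nrm y.
Proof. rewrite /nrm -big_split /=; apply: ler_sum => i _; rewrite !mxE; exact: ler_normD. Qed.

Lemma nrm0 n : nrm (0 : Zn n) = 0.
Proof. rewrite /nrm big1 // => i _; rewrite !mxE. done. Qed.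

Lemma nrm_ev n (i : 'I_n) : nrm (ev i) = 1.
Proof.
rewrite /nrm (bigD1 i) //= big1 => [|j hj]; rewrite !mxE ?eqxx //.
by rewrite (negbTE hj).
Qed.

Lemma psiD n (x y : Zn n) : psi (x + y) = psi x + psi y.
Proof. rewrite /psi -big_split /=; apply: eq_bigr => i _; rewrite !mxE. done. Qed.
Lemma psiN n (x : Zn n) : psi (- x) = - psi x.
Proof. rewrite /psi -sumrN; apply: eq_bigr => i _; rewrite !mxE. done. Qed.
Lemma psiB n (x y : Zn n) : psi (x - y) = psi x - psi y.
Proof. by rewrite psiD psiN. Qed.
Lemma psiZ n (a : int) (x : Zn n) : psi (a *: x) = a * psi x.
Proof. rewrite /psi mulr_sumr; apply: eq_bigr => i _; rewrite !mxE. done. Qed.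
Lemma chiD n (x y : Zn n) : chi (x + y) = chi x + chi y.
Proof. rewrite /chi -big_split /=; apply: eq_bigr => i _; rewrite !mxE mulrDr. done. Qed.
Lemma chiN n (x : Zn n) : chi (- x) = - chi x.
Proof. rewrite /chi -sumrN; apply: eq_bigr => i _; rewrite !mxE mulrN. done. Qed.
Lemma chiB n (x y : Zn n) : chi (x - y) = chi x - chi y.
Proof. by rewrite chiD chiN. Qed.
Lemma chiZ n (a : int) (x : Zn n) : chi (a *: x) = a * chi x.
Proof. rewrite /chi mulr_sumr; apply: eq_bigr => i _; rewrite !mxE. ring. Qed.
Lemma psi_ev n (i : 'I_n) : psi (ev i) = 1.
Proof.
rewrite /psi (bigD1 i) //= big1 => [|j hj]; rewrite !mxE ?eqxx //.
by rewrite (negbTE hj).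
Qed.
Lemma chi_ev n (i : 'I_n) : chi (ev i) = (i : nat)%:Z.
Proof.
rewrite /chi (bigD1 i) //= big1 => [|j hj]; rewrite !mxE ?eqxx ?mulr1 ?addr0 //.
by rewrite (negbTE hj) mulr0.
Qed.
Lemma psi_le n (y : Zn n) : `|psi y| <= nrm y.
Proof. exact: ler_norm_sum. Qed.
Lemma par n (y : Zn n) : (2 %| nrm y - psi y)%Z.
Proof.
rewrite /nrm /psi -sumrB; apply: (big_ind (fun z => (2 %| z)%Z)) => //.
  by move=> u v hu hv; rewrite rpredD.
move=> i _; set a := y ord0 i.
have [ha|ha] := lerP 0 a.
  by rewrite ger0_norm // subrr.
rewrite ltr0_norm //; apply/dvdzP; exists (- a); ring.
Qed.

Lemma ndvd_small (i j n : nat) : (i < n)%N -> (j < n)%N -> (n%:Z %| i%:Z - j%:Z)%Z -> i = j.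
Proof. move=> hi hj /dvdzP [q hq]. case: (ltrgtP q 0) => hq0; nia. Qed.

Lemma allnonpos n (y : Zn n) : psi y = 0 -> (forall t, y ord0 t <= 0) -> y = 0.
Proof.
move=> h0 hle; apply/rowP => t; rewrite !mxE.
have h1 : \sum_(i < n) (- y ord0 i) = 0 by rewrite sumrN -/(psi y) h0 oppr0.
have hz : forall i : 'I_n, predT i -> 0 <= - y ord0 i by move=> i _; rewrite oppr_ge0.
have := psumr_eq0P hz h1 (i := t) isT.
by move/eqP; rewrite oppr_eq0 => /eqP.
Qed.

Lemma split2 n (F : 'I_n -> int) i j : j != i ->
  \sum_(t < n) F t = F i + F j + \sum_(t < n | (t != i) && (t != j)) F t.
Proof. move=> hij; rewrite (bigD1 i) //= (bigD1 j) //= addrA. done. Qed.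

Lemma arith1 (yi yj R S q : int) : 0 < yi -> yj < 0 -> yi + yj + S = 0 ->
  `|yi| + `|yj| + R <= 3 -> `|S| <= R -> 0 <= R -> 
  `|yi| + `|yj| + R - (yi + yj + S) = q * 2 -> [/\ yi = 1, yj = -1 & R = 0].
Proof. move=> *. split; lia. Qed.

Lemma K n (y : Zn n) : psi y = 0 -> (n%:Z %| chi y)%Z -> nrm y <= 3 -> y = 0.
Proof.
move=> hp hc hn.
have [i hi|hall] := pickP (fun t => 0 < y ord0 t); last first.
  apply: allnonpos => // t; move: (hall t) => /= /negbT; rewrite -leNgt. done.
have [j hj|hall] := pickP (fun t => y ord0 t < 0); last first.
  have : - y = 0.
    apply: allnonpos; first by rewrite psiN hp oppr0.
    move=> t; move: (hall t) => /= /negbT; rewrite -leNgt !mxE oppr_le0. done.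
  by move/eqP; rewrite oppr_eq0 => /eqP.
have hij : j != i by apply/eqP => e; move: hi hj; rewrite e; lia.
move: hp hc hn (par y).
rewrite /psi /chi /nrm (split2 (fun t => y ord0 t) hij) (split2 (fun t => (t : nat)%:Z * y ord0 t) hij)
  (split2 (fun t => `|y ord0 t|) hij).
set S := \sum_(t | _) y ord0 t.
set Q := \sum_(t | _) _ * y ord0 t.
set R := \sum_(t | _) `|y ord0 t|.
have hSR : `|S| <= R by exact: ler_norm_sum.
have hR : 0 <= R by apply: sumr_ge0.
move=> hp hc hn hpar.
have [hyi [hyj hR0]] : [/\ y ord0 i = 1, y ord0 j = -1 & R = 0].
  case/dvdzP: hpar => q hq; exact: (arith1 hi hj hp hn hSR hR hq).
have hz : forall t : 'I_n, (t != i) && (t != j) -> 0 <= `|y ord0 t| by move=> *; exact: normr_ge0.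
have hQ : Q = 0.
  rewrite /Q big1 // => t ht; have := psumr_eq0P hz hR0 ht.
  by move/eqP; rewrite normr_eq0 => /eqP ->; rewrite mulr0.
move: hc; rewrite hQ hyi hyj addr0 mulr1 mulrN1 => hc.
have e : nat_of_ord j = nat_of_ord i.
  apply: ndvd_small (ltn_ord j) (ltn_ord i) _; by rewrite -rpredN opprB.
by move: hij; rewrite (ord_inj e) eqxx.
Qed.

Definition sgm (N : nat) (a : nat -> bool) (k : int) : int :=
  if k < 0 then 1 else
  if (N %| absz k)%N && (0 < absz k)%N then (if a (absz k %/ N).-1 then 0 else 1) else 0.
Definition code N a (c : Zn N) : Prop :=
  (4 %| psi c)%Z /\ (N%:Z %| chi c + sgm N a (psi c %/ 4)%Z)%Z.
Definition DD N (e : Zn N) (p : Zn N) : Prop := nrm p <= 1 \/ nrm (p - e) <= 1.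

Lemma arith4 (x y : int) : `|x| <= y -> y <= 3 -> (4 %| x)%Z -> x = 0.
Proof. lia. Qed.

Lemma Kc N a (c d : Zn N) : code a c -> code a d -> nrm (c - d) <= 3 -> c = d.
Proof.
case=> h4c hnc [h4d hnd] h3.
have hp : psi c = psi d.
  have hl := psi_le (c - d); rewrite psiB in hl.
  apply/eqP; rewrite -subr_eq0; apply/eqP.
  exact: (arith4 hl h3 (rpredB h4c h4d)).
apply/eqP; rewrite -subr_eq0; apply/eqP; apply: K => //.
  by rewrite psiB hp subrr.
have := rpredB hnc hnd; rewrite hp chiB.
set s := sgm _ _ _.
have -> : chi c + s - (chi d + s) = chi c - chi d by ring.
done.
Qed.

Lemma nrm_sym N (p q : Zn N) : nrm (q - p) = nrm (p - q).
Proof. by rewrite -nrmN opprB. Qed.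

Lemma DD_mixed N (e p q : Zn N) : nrm e = 1 -> nrm p <= 1 -> nrm (q - e) <= 1 -> nrm (q - p) <= 3.
Proof.
move=> he hp hq.
have -> : q - p = (q - e) + (e + - p) by rewrite addrA subrK.
apply: le_trans (nrmD _ _) _.
have := nrmD e (- p); rewrite nrmN he => h.
lia.
Qed.

Lemma DD3 N (e p q : Zn N) : nrm e = 1 -> DD e p -> DD e q -> nrm (q - p) <= 3.
Proof.
move=> he [hp|hp] [hq|hq].
- apply: le_trans (nrmD _ _) _; rewrite nrmN; lia.
- exact: DD_mixed hp hq.
- rewrite nrm_sym; exact: DD_mixed hq hp.
- have -> : q - p = (q - e) + - (p - e) by rewrite opprB addrA subrK.
  apply: le_trans (nrmD _ _) _; rewrite nrmN; lia.
Qed.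

Lemma DS1_DD N (e c x : Zn N) : DS1 c (c + e) x <-> DD e (x - c).
Proof. by rewrite /DS1 /S1 /DD !lee_nrm opprD addrA. Qed.

Lemma idx N (z : int) : (0 < N)%N -> exists i : 'I_N, (N%:Z %| z - (i : nat)%:Z)%Z.
Proof.
move=> hN.
set r := z - N%:Z * (z %/ N)%Z.
have hr : 0 <= r < N%:Z by rewrite /r; lia.
have hr2 : (absz r < N)%N by lia.
exists (Ordinal hr2) => /=.
rewrite gez0_abs; last by case/andP: hr.
apply/dvdzP; exists (z %/ N)%Z; rewrite /r; ring.
Qed.

Definition e0 m : Zn m.+2 := ev (ord0 : 'I_m.+2).

Lemma chi_e0 m : chi (e0 m) = 0.
Proof. by rewrite /e0 chi_ev. Qed.

Lemma psi_e0 m : psi (e0 m) = 1.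
Proof. exact: psi_ev. Qed.
Lemma nrm_e0 m : nrm (e0 m) = 1.
Proof. exact: nrm_ev. Qed.

Lemma levels m (l z : int) : -1 <= l <= 2 ->
  exists p : Zn m.+2, [/\ DD (e0 m) p, psi p = l & (m.+2%:Z %| z - chi p)%Z].
Proof.
move=> hl.
have [i hi] := @idx m.+2 z isT.
have [j hj] := @idx m.+2 (- z) isT.
have hj' : (m.+2%:Z %| z - chi (- ev j))%Z.
  rewrite chiN chi_ev.
  have -> : z - - (j : nat)%:Z = - (- z - (j : nat)%:Z) by ring.
  by rewrite rpredN.
have : l = -1 \/ l = 0 \/ l = 1 \/ l = 2 by lia.
case=> [->|[->|[->|->]]].
- exists (- ev j); split => //.
  + by left; rewrite nrmN nrm_ev.
  + by rewrite psiN psi_ev.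
- exists (e0 m - ev j); split.
  + by right; rewrite addrC addKr nrmN nrm_ev.
  + by rewrite psiB psi_ev psi_e0 subrr.
  + by rewrite chiB chi_e0 add0r -chiN.
- exists (ev i); split.
  + by left; rewrite nrm_ev.
  + by rewrite psi_ev.
  + by rewrite chi_ev.
- exists (e0 m + ev i); split.
  + by right; rewrite addrC addKr nrm_ev.
  + by rewrite psiD psi_ev psi_e0.
  + by rewrite chiD chi_e0 add0r chi_ev.
Qed.

Lemma cover_lem m a (x : Zn m.+2) : exists c, code a c /\ DD (e0 m) (x - c).
Proof.
set k := ((psi x + 1) %/ 4)%Z.
have hl : -1 <= psi x - 4 * k <= 2 by rewrite /k; lia.
have [p [hp hpsi hchi]] := @levels m _ (chi x + sgm m.+2 a k) hl.
exists (x - p); split; last by rewrite opprB addrCA subrr addr0.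
have hpc : psi (x - p) = 4 * k by rewrite psiB hpsi; ring.
rewrite /code hpc; split; first by lia.
have -> : ((4 * k) %/ 4)%Z = k by lia.
rewrite chiB.
have -> : chi x - chi p + sgm m.+2 a k = chi x + sgm m.+2 a k - chi p by ring.
done.
Qed.

Lemma id_iso n : lin_isometry (fun x : Zn n => x).
Proof. split => //; exact: (@Bijective _ _ id id). Qed.

Lemma meet_lem m a (d1 d2 x : Zn m.+2) : code a d1 -> code a d2 ->
  DD (e0 m) (x - d1) -> DD (e0 m) (x - d2) -> d1 = d2.
Proof.
move=> h1 h2 hx1 hx2; apply: Kc h1 h2 _.
have := DD3 (nrm_e0 m) hx2 hx1.
have -> : x - d1 - (x - d2) = d2 - d1 by rewrite opprB addrC addrA subrK.
by rewrite nrm_sym.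
Qed.

Lemma perfect m a : perfect_lee_code_diam4 (code (N := m.+2) a).
Proof.
split.
  move=> c d hc hd hcd; rewrite lee_nrm leNgt; apply/negP => h.
  apply: hcd; apply/esym; apply: Kc hd hc _; lia.
exists (fun T => exists c, code a c /\ T = DS1 c (c + e0 m)).
split.
- split.
  + move=> T [c [hc ->]]; exists (fun x => x), c, (c + e0 m); split.
    * exact: id_iso.
    * by rewrite lee_nrm addrC addKr nrm_e0.
    * move=> x; split; first by move=> h; exists x.
      by case=> y hy <-.
  + move=> T1 T2 [c1 [h1 ->]] [c2 [h2 ->]] hne x [hx1 hx2]; apply: hne.
    move/DS1_DD: hx1 => hx1; move/DS1_DD: hx2 => hx2.
    by rewrite (meet_lem h1 h2 hx1 hx2).
  + move=> x; have [c [hc hx]] := cover_lem a x.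
    by exists (DS1 c (c + e0 m)); [exists c | apply/DS1_DD].
- move=> T [c [hc ->]]; exists c; split => //.
    by apply/DS1_DD; left; rewrite subrr nrm0.
  move=> d hd /DS1_DD hdT; apply: (meet_lem hd hc _ hdT); left; rewrite subrr nrm0 //.
- move=> T1 T2 c1 c2 [d1 [h1 ->]] [d2 [h2 ->]] hne hc1 /DS1_DD hx1 hc2 /DS1_DD hx2 e.
  apply: hne; subst c2.
  by rewrite (meet_lem h1 h2 hx1 hx2).
Qed.

Definition Pm n (M : int) (L : Zn n -> Prop) := exists u : Zn n, nrm u = 1 /\ L (M *: u).

Lemma f0 n (f : Zn n -> Zn n) : is_linear f -> f 0 = 0.
Proof.
move=> hl; have := hl 1 0 0; rewrite !scale1r !addr0 => e.
have : f 0 - f 0 = f 0 + f 0 - f 0 by rewrite -e.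
by rewrite subrr addrK.
Qed.

Lemma fZ n (f : Zn n -> Zn n) M u : is_linear f -> f (M *: u) = M *: f u.
Proof. move=> hl; have := hl M u 0; by rewrite (f0 hl) !addr0. Qed.

Lemma nrm_lee n (y : Zn n) : nrm y = lee_dist 0 y.
Proof. by rewrite lee_nrm subr0. Qed.

Lemma fnrm n (f : Zn n -> Zn n) u : lin_isometry f -> nrm (f u) = nrm u.
Proof. case=> hl hb hd; have := hd 0 u; rewrite (f0 hl) !nrm_lee => ->. done. Qed.

Lemma Pm_iso n M (L1 L2 : Zn n -> Prop) : iso_codes L1 L2 -> Pm M L1 -> Pm M L2.
Proof.
move=> [f [hf hL]] [u [hu h1]]; exists (f u); split; first by rewrite fnrm.
apply/hL; exists (M *: u) => //; case: hf => hl _ _; exact: fZ.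
Qed.

Lemma Pm_iso_inv n M (L1 L2 : Zn n -> Prop) : iso_codes L1 L2 -> Pm M L2 -> Pm M L1.
Proof.
move=> [f [hf hL]] [u [hu /hL [x hx hfx]]].
have hf' := hf; case: hf' => hl [g fg gf] _.
exists (g u); split; first by rewrite -(fnrm (g u) hf) gf.
suff -> : M *: g u = x by [].
apply: (can_inj fg); by rewrite fZ // gf hfx.
Qed.

Lemma sgm_K N a j : (0 < N)%N -> sgm N a (N * j.+1)%N%:Z = if a j then 0 else 1.
Proof.
move=> hN; rewrite /sgm /=.
rewrite dvdn_mulr // muln_gt0 hN /= mulKn //.
Qed.

Lemma not_dvd1 N : (1 < N)%N -> ~ (N%:Z %| 1)%Z.
Proof. by move=> hN; rewrite dvdz1 /=; case: N hN => [|[|]]. Qed.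

Lemma arith_pm (p : int) : `|p| <= 1 -> (2 %| 1 - p)%Z -> p = 1 \/ p = -1.
Proof. lia. Qed.

Lemma Pm_code m a j : Pm (4 * (m.+2 * j.+1)%N%:Z) (code (N := m.+2) a) <-> a j.
Proof.
set K := (m.+2 * j.+1)%N.
have hK : (0 < K)%N by rewrite muln_gt0.
have hdM : forall z : int, (m.+2%:Z %| 4 * K%:Z * z)%Z.
  move=> z; apply/dvdzP; exists (4 * j.+1%:Z * z); rewrite /K PoszM; ring.
split.
- move=> [u [hu [h4 hn]]]; move: h4 hn; rewrite psiZ chiZ => h4 hn.
  have := par u; rewrite hu => hp.
  have hl := psi_le u; rewrite hu in hl.
  case: (arith_pm hl hp) => e; rewrite e in h4 hn.
  + have e4 : ((4 * K%:Z * 1) %/ 4)%Z = K%:Z by lia.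
    rewrite e4 in hn; move: hn; rewrite /K sgm_K // -/K; case: (a j) => // hn.
    have e6 : 4 * K%:Z * chi u + 1 - 4 * K%:Z * chi u = 1 by ring.
    move: (rpredB hn (hdM (chi u))); rewrite e6 => h.
    by exfalso; apply: (@not_dvd1 m.+2).
  + have e4 : ((4 * K%:Z * -1) %/ 4)%Z = - K%:Z by lia.
    rewrite e4 /sgm in hn.
    have e5 : (- K%:Z < 0) = true by lia.
    rewrite e5 in hn.
    have e6 : 4 * K%:Z * chi u + 1 - 4 * K%:Z * chi u = 1 by ring.
    move: (rpredB hn (hdM (chi u))); rewrite e6 => h.
    by exfalso; apply: (@not_dvd1 m.+2).
- move=> ha; exists (e0 m); split; first exact: nrm_e0.
  rewrite /code psiZ chiZ psi_e0 chi_e0 mulr0 add0r mulr1.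
  split; first by lia.
  have -> : ((4 * K%:Z) %/ 4)%Z = K%:Z by lia.
  by rewrite /K sgm_K // ha.
Qed.

Theorem theorem8 (n : nat) (hn : (2 <= n)%N) :
  (exists C : (nat -> bool) -> (Zn n -> Prop),
      (forall a, perfect_lee_code_diam4 (C a)) /\
      (forall a b, iso_codes (C a) (C b) -> a = b)) /\
  (exists g : (Zn n -> Prop) -> (nat -> bool),
      forall L1 L2, perfect_lee_code_diam4 L1 -> perfect_lee_code_diam4 L2 ->
        g L1 = g L2 -> iso_codes L1 L2).
Proof.
case: n hn => [|[|m]] // _.
split.
- exists (fun a => code (N := m.+2) a); split; first exact: perfect.
  move=> a b hiso; apply: functional_extensionality => j.
  have h1 := Pm_code m a j; have h2 := Pm_code m b j.
  apply/idP/idP => h.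
  + by apply/h2; apply: Pm_iso hiso _; apply/h1.
  + by apply/h1; apply: Pm_iso_inv hiso _; apply/h2.
- exists (fun L k => match @unpickle 'rV[int]_m.+2 k with
    | Some x => if excluded_middle_informative (L x) then true else false
    | None => false end).
  move=> L1 L2 _ _ e.
  exists (fun x => x); split; first exact: id_iso.
  move=> y.
  have hy : L1 y <-> L2 y.
    have := congr1 (fun h => h (pickle y)) e; rewrite /= pickleK.
    case: (excluded_middle_informative (L1 y)); case: (excluded_middle_informative (L2 y)) => //.
  split.
    by move=> h; exists y => //; apply hy.
  by case=> x hx exy; apply hy; rewrite -exy.
Qed.
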